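(* Let $(K_n;n\ge1)$ be non-negative integral kernels on $\mathsf{X}$, $(\nu_n;n\ge1)$ nonzero finite measures, and $(S_n^-,S_n^+;n\ge1)$ positive bounded measurable functions such that \[ S_n^-(x)\nu_n(\cdot)\le K_n(x,\cdot)\le S_n^+(x)\nu_n(\cdot),\qquad\forall x\in\mathsf{X},\ n\ge1. \] Let $\overline{S}_n:=\sup_{x,x'}\frac{S_n^+(x)}{S_n^-(x')}$, $C_S:=\sup_{n\ge1}\overline{S}_n$ and $\rho_n:=1-\left(\inf_x\frac{S_n^-(x)}{S_n^+(x)}\right)^2$. Then \[ \sup_{n\ge1}\sup_{x,x'\in\mathsf{X}}\frac{K_{0,n}(1)(x)}{K_{0,n}(1)(x')}\le C_S, \] and for every probability measure $\eta$, every bounded measurable $\varphi$ and every $n\ge1$, \[ \sup_{x\in\mathsf{X}}\left|\frac{K_{0,n}(\varphi)(x)}{\eta K_{0,n}(1)}-\frac{K_{0,n}(1)(x)}{\eta K_{0,n}(1)}\frac{\eta K_{0,n}(\varphi)}{\eta K_{0,n}(1)}\right|\le 2\|\varphi\|\,C_S\prod_{p=1}^n\rho_p. \]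
   Context: $(\mathsf{X},\mathcal{B})$ is a measurable space. For a measure $\mu$, kernel $K$ and function $\varphi$: $\mu(\varphi)=\int\varphi\,d\mu$, $K(\varphi)(x)=\int K(x,dy)\varphi(y)$, $\mu K(\cdot)=\int\mu(dx)K(x,\cdot)$; $1$ is the constant function one; $\|\varphi\|=\sup_x|\varphi(x)|$. For kernels $K_n$, $K_{0,n}:=K_1K_2\cdots K_n$ (composition). *)

(* Defs.v *)
From HB Require Import structures.
From mathcomp Require Import all_boot all_order all_algebra.
From mathcomp Require Import all_classical all_reals all_analysis.
Set Implicit Arguments. Unset Strict Implicit. Unset Printing Implicit Defensive.
Import Order.TTheory GRing.Theory Num.Theory.
Local Open Scope ring_scope.
Local Open Scope classical_set_scope.

Section Defs.
Context {d : measure_display} {X : measurableType d} {R : realType}.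

Definition Kop (k : R.-ker X ~> X) (f : X -> R) : X -> R :=
  fun x => fine (\int[k x]_y (f y)%:E)%E.

(* K_{0,n}(phi) = K_1 (K_2 ( ... (K_n phi))) *)
Definition Kcomp (K : nat -> R.-ker X ~> X) (n : nat) (f : X -> R) : X -> R :=
  foldr (fun p g => Kop (K p) g) f (iota 1 n).

Definition mapp (mu : {measure set X -> \bar R}) (f : X -> R) : R :=
  fine (\int[mu]_x (f x)%:E)%E.

Definition supnorm (f : X -> R) : \bar R := ereal_sup (range (fun x => (`|f x|)%:E)).

Definition Sbar (Sp Sm : X -> R) : \bar R :=
  ereal_sup [set (Sp x / Sm x')%:E | x in setT & x' in setT].

Definition rho (Sp Sm : X -> R) : R :=
  1 - (inf [set Sm x / Sp x | x in setT]) ^+ 2.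

End Defs.

(* Main.v *)
Require Import Defs.
From HB Require Import structures.
From mathcomp Require Import all_boot all_order all_algebra.
From mathcomp Require Import all_classical all_reals all_analysis.
From mathcomp Require Import measurable_realfun.
From mathcomp Require Import ring lra.
Import Order.TTheory GRing.Theory Num.Theory.
Local Open Scope ring_scope.
Local Open Scope classical_set_scope.
Section Aux.
Context {d : measure_display} {X : measurableType d} {R : realType}.

Definition BM (f : X -> R) := measurable_fun setT f /\ exists M : R, forall x, `|f x| <= M.

Lemma BM_cst c : BM (fun=> c).
Proof. by split; [exact: measurable_cst| exists `|c|]. Qed.

Lemma BM_lin f g c : BM f -> BM g -> BM (fun y => f y - c * g y).
Proof.
move=> [mf [M1 h1]] [mg [M2 h2]]; split.
  apply: measurable_funB => //; apply: measurable_funM => //; exact: measurable_cst.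
exists (M1 + `|c| * M2) => x; rewrite (le_trans (ler_normB _ _))// lerD// normrM.
by rewrite ler_wpM2l.
Qed.

Lemma int_bm (mu : {measure set X -> \bar R}) (f : X -> R) :
  (mu setT < +oo)%E -> BM f -> mu.-integrable setT (EFin \o f).
Proof.
move=> fin [mf [M hM]]; apply/integrableP; split; first exact/measurable_EFinP.
apply: (@le_lt_trans _ _ ((`|M|)%:E * mu setT)%E).
  apply: integral_le_bound => //.
  - exact/measurable_EFinP.
  - by apply: aeW => x _ /=; rewrite lee_fin (le_trans (hM x)) ?ler_norm.
by rewrite lte_mul_pinfty.
Qed.

Lemma int_pos (mu : {measure set X -> \bar R}) (f : X -> R) :
  mu setT != 0%E -> measurable_fun setT f -> (forall x, 0 < f x) ->
  (0 < \int[mu]_x (f x)%:E)%E.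
Proof.
move=> mu0 mf fpos.
rewrite lt0e integral_ge0 ?andbT; last by move=> x _; rewrite lee_fin ltW.
apply/negP => /eqP h.
have mEf : measurable_fun setT (EFin \o f) by exact/measurable_EFinP.
have : (\int[mu]_(x in setT) `|(EFin \o f) x| = 0)%E.
  by rewrite -h; apply: eq_integral => x _ /=; rewrite ger0_norm // ltW.
move/(ae_eq_integral_abs mu measurableT mEf) => [N [mN N0 sub]].
move/eqP: mu0; apply; apply/eqP; rewrite -measure_le0 -N0.
apply: le_measure; rewrite ?inE //.
move=> x _; apply: sub => /(_ I) /= -[fx0].
by move: (fpos x); rewrite fx0 ltxx.
Qed.

Lemma cmp_lo (mu1 mu2 : {measure set X -> \bar R}) (c : R) : 0 <= c ->
  (forall A, measurable A -> (c%:E * mu2 A <= mu1 A)%E) ->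
  forall f : X -> R, (forall x, 0 <= f x) -> measurable_fun setT f ->
  (c%:E * \int[mu2]_x (f x)%:E <= \int[mu1]_x (f x)%:E)%E.
Proof.
move=> c0 h f f0 mf.
have -> : c = (NngNum c0)%:num by [].
rewrite -ge0_integral_mscale //; last by move=> x _; rewrite lee_fin.
all: try exact/measurable_EFinP.
apply: ge0_le_measure_integral => //.
all: try exact/measurable_EFinP.
all: try (by move=> A mA /=; exact: h).
all: by move=> x; rewrite lee_fin.
Qed.

Lemma cmp_hi (mu1 mu2 : {measure set X -> \bar R}) (c : R) : 0 <= c ->
  (forall A, measurable A -> (mu1 A <= c%:E * mu2 A)%E) ->
  forall f : X -> R, (forall x, 0 <= f x) -> measurable_fun setT f ->
  (\int[mu1]_x (f x)%:E <= c%:E * \int[mu2]_x (f x)%:E)%E.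
Proof.
move=> c0 h f f0 mf.
have -> : c = (NngNum c0)%:num by [].
rewrite -ge0_integral_mscale //; last by move=> x _; rewrite lee_fin.
all: try exact/measurable_EFinP.
apply: ge0_le_measure_integral => //.
all: try exact/measurable_EFinP.
all: try (by move=> A mA /=; exact: h).
all: by move=> x; rewrite lee_fin.
Qed.

Lemma rlin (mu : {measure set X -> \bar R}) (f g : X -> R) c : (mu setT < +oo)%E -> BM f -> BM g ->
  Rintegral mu setT (fun y => f y - c * g y) =
  Rintegral mu setT f - c * Rintegral mu setT g.
Proof.
move=> fin bf bg.
have bcg : BM (fun y => c * g y).
  suff <- : (fun y => 0 - (-c) * g y) = (fun y => c * g y) by exact: (@BM_lin (fun=> 0) g (-c) (BM_cst 0) bg).
  by apply: funext => y; rewrite sub0r mulNr opprK.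
rewrite RintegralB //; try exact: int_bm.
by rewrite RintegralZl //; exact: int_bm.
Qed.

Lemma BM_scal f c : BM f -> BM (fun y => c * f y).
Proof.
move=> bf.
suff <- : (fun y => 0 - (-c) * f y) = (fun y => c * f y) by exact: (@BM_lin (fun=> 0) f (-c) (BM_cst 0) bf).
by apply: funext => y; rewrite sub0r mulNr opprK.
Qed.

Lemma mapp_pos (mu : {measure set X -> \bar R}) (f : X -> R) :
  (mu setT < +oo)%E -> mu setT != 0%E -> BM f -> (forall y, 0 < f y) -> 0 < mapp mu f.
Proof.
move=> fin mu0 bf fpos; rewrite /mapp; apply: fine_gt0; apply/andP; split.
  by apply: int_pos => //; exact: bf.1.
rewrite -ge0_fin_numE; last by apply: integral_ge0 => y _; rewrite lee_fin ltW.
by apply: integrable_fin_num => //; exact: int_bm.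
Qed.

End Aux.
Arguments int_bm {d X R mu f}.
Arguments int_pos {d X R mu f}.
Section Ker.
Context {d : measure_display} {X : measurableType d} {R : realType}.
Variables (k : R.-ker X ~> X) (nu : {finite_measure set X -> \bar R}) (sm sp : X -> R).
Hypotheses (smpos : forall x, 0 < sm x) (sppos : forall x, 0 < sp x)
  (spbd : exists M, forall x, sp x <= M)
  (hk : forall x A, measurable A -> ((sm x)%:E * nu A <= k x A /\ k x A <= (sp x)%:E * nu A)%E).

Lemma nufin : (nu setT < +oo)%E.
Proof. by rewrite -ge0_fin_numE // fin_num_measure. Qed.

Lemma nuE : nu setT = (fine (nu setT))%:E.
Proof. by rewrite fineK // fin_num_measure. Qed.

Lemma kfin x : (k x setT < +oo)%E.
Proof.
apply: (le_lt_trans (hk x setT measurableT).2).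
by rewrite lte_mul_pinfty // ?lee_fin ?ltW //; exact: nufin.
Qed.

Lemma kT_le x : fine (k x setT) <= sp x * fine (nu setT).
Proof.
rewrite -lee_fin fineK; last by rewrite ge0_fin_numE // kfin.
by rewrite EFinM -nuE; exact: (hk x setT measurableT).2.
Qed.

Lemma KopE (f : X -> R) x : Kop k f x = Rintegral (k x) setT f.
Proof. by []. Qed.

Lemma mappE (mu : {measure set X -> \bar R}) (f : X -> R) : mapp mu f = Rintegral mu setT f.
Proof. by []. Qed.

Lemma Kop_meas f : BM f -> measurable_fun setT (Kop k f).
Proof.
move=> bf; have [mf [M hM]] := bf.
have e : Kop k f = fun x => fine (\int[k x]_y ((f y + `|M|)%:E))%E - `|M| * fine (k x setT).
  apply: funext => x; rewrite KopE.
  have -> : fine (\int[k x]_y ((f y + `|M|)%:E))%E = Rintegral (k x) setT (fun y => f y + `|M|) by [].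
  rewrite RintegralD //; last 2 first.
  - exact: (int_bm (kfin x) bf).
  - exact: (int_bm (kfin x) (BM_cst _)).
  by rewrite Rintegral_cst // addrK.
rewrite e; apply: measurable_funB.
  apply: measurableT_comp; first exact: fine_measurable.
  apply: measurable_fun_integral_kernel; first exact: measurable_kernel.
    move=> y; rewrite lee_fin; move: (hM y) (ler_norm M).
    by rewrite ler_norml => /andP[h1 h2] h3; lra.
  apply/measurable_EFinP; apply: measurable_funD => //; exact: measurable_cst.
apply: measurable_funM; first exact: measurable_cst.
apply: measurableT_comp; first exact: fine_measurable.
exact: measurable_kernel.
Qed.

Lemma nuN_ge0 : 0 <= fine (nu setT).
Proof. by rewrite fine_ge0 // measure_ge0. Qed.

Lemma Kop_bd f : BM f -> BM (Kop k f).
Proof.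
move=> bf; split; first exact: Kop_meas.
have [mf [M hM]] := bf; have [Mp hMp] := spbd.
exists (`|M| * (`|Mp| * fine (nu setT))) => x; rewrite KopE.
have ikf := int_bm (kfin x) bf.
apply: (le_trans (le_normr_Rintegral _ _)) => //.
apply: (le_trans (le_Rintegral (f2 := fun=> `|M|) _ _ _ _)) => //.
- exact: integrable_norm.
- exact: (int_bm (kfin x) (BM_cst _)).
- by move=> y _; rewrite (le_trans (hM y)) // ler_norm.
rewrite Rintegral_cst // ler_wpM2l //.
apply: (le_trans (kT_le x)); rewrite ler_wpM2r //; first exact: nuN_ge0.
by rewrite (le_trans (hMp x)) // ler_norm.
Qed.

Lemma Kop_lo f x : BM f -> (forall y, 0 <= f y) -> sm x * mapp nu f <= Kop k f x.
Proof.
move=> bf f0; rewrite mappE KopE /Rintegral -lee_fin EFinM.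
rewrite !fineK.
- apply: cmp_lo => //; first exact: ltW.
  + by move=> A mA; exact: (hk x A mA).1.
  + exact: bf.1.
- by apply: integrable_fin_num => //; exact: (int_bm (kfin x) bf).
- by apply: integrable_fin_num => //; exact: (int_bm nufin bf).
Qed.

Lemma Kop_hi f x : BM f -> (forall y, 0 <= f y) -> Kop k f x <= sp x * mapp nu f.
Proof.
move=> bf f0; rewrite mappE KopE /Rintegral -lee_fin EFinM.
rewrite !fineK.
- apply: cmp_hi => //; first exact: ltW.
  + by move=> A mA; exact: (hk x A mA).2.
  + exact: bf.1.
- by apply: integrable_fin_num => //; exact: (int_bm nufin bf).
- by apply: integrable_fin_num => //; exact: (int_bm (kfin x) bf).
Qed.

Lemma Kop_lin f g c x : BM f -> BM g ->
  Kop k (fun y => f y - c * g y) x = Kop k f x - c * Kop k g x.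
Proof. by move=> bf bg; rewrite !KopE rlin //; exact: kfin. Qed.

Lemma mapp_lin f g c : BM f -> BM g ->
  mapp nu (fun y => f y - c * g y) = mapp nu f - c * mapp nu g.
Proof. by move=> bf bg; rewrite !mappE rlin //; exact: nufin. Qed.

Lemma Kop_lo_neg f x : BM f -> (forall y, f y <= 0) -> Kop k f x <= sm x * mapp nu f.
Proof.
move=> bf f0.
have bn := BM_lin (fun=> 0) f 1 (BM_cst 0) bf.
have := Kop_lo (fun y => 0 - 1 * f y) x bn.
rewrite Kop_lin //; last exact: BM_cst.
rewrite mapp_lin //; last exact: BM_cst.
rewrite KopE mappE !Rintegral_cst // !mul0r !sub0r !mul1r mulrN lerN2.
by apply => y; rewrite sub0r mul1r oppr_ge0.
Qed.

End Ker.

Lemma arith_step (R : realFieldType) (G H m D sm sp N a b e : R) :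
  0 < N -> 0 <= e -> e * sp <= sm -> 0 <= H -> H <= sp * N ->
  sm * a <= G - m * H -> G - (m + D) * H <= sm * b -> 0 <= a -> b <= 0 ->
  a - b = D * N ->
  (m + e * (a / N)) * H <= G /\ G <= (m + e * (a / N) + (1 - e) * D) * H.
Proof.
move=> N0 e0 esp H0 HN hA hB a0 b0 ab.
have N0' : N != 0 by rewrite gt_eqF.
set al := a / N; have aE : a = al * N by rewrite /al divfK.
have al0 : 0 <= al by rewrite /al divr_ge0 // ltW.
set be := b / N; have bE : b = be * N by rewrite /be divfK.
have DE : D = al - be by rewrite /al /be -mulrBl ab mulfK.
have h1 : e * al * H <= e * al * (sp * N) by rewrite ler_wpM2l // mulr_ge0.
have h2 : e * sp * (al * N) <= sm * (al * N) by rewrite ler_wpM2r // mulr_ge0 // ltW.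
have be0 : be <= 0 by rewrite /be ler_pdivrMr // mul0r.
have h3 : e * (- be) * H <= e * (- be) * (sp * N) by rewrite ler_wpM2l // mulr_ge0 // oppr_ge0.
have h4 : e * sp * (- be * N) <= sm * (- be * N) by rewrite ler_wpM2r // mulr_ge0 ?oppr_ge0 // ltW.
rewrite aE in hA; rewrite bE in hB; rewrite DE; clearbody al be.
rewrite DE in hB.
have eqA : e * (- be) * (sp * N) = e * sp * (- be * N) by ring.
have eqB : sm * (be * N) = - (sm * (- be * N)) by ring.
have eqC : (m + e * al + (1 - e) * (al - be)) * H = (m + (al - be)) * H - e * (- be) * H by ring.
have eqD : e * al * (sp * N) = e * sp * (al * N) by ring.
rewrite eqA in h3; rewrite eqB in hB; rewrite eqD in h1.
split.
- rewrite mulrDl.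
  move: h1 h2 hA; generalize (e * al * H) (e * sp * (al * N)) (sm * (al * N)) (m * H).
  move=> u v w z; lra.
- rewrite eqC.
  move: h3 h4 hB; generalize (e * (- be) * H) (e * sp * (- be * N)) (sm * (- be * N)) ((m + (al - be)) * H).
  move=> u v w z; lra.
Qed.

Lemma arith_fin (R : realFieldType) (Z q P E m D : R) : 0 < Z -> 0 < q -> m * q <= P -> P <= (m + D) * q ->
  m * Z <= E -> E <= (m + D) * Z ->
  `| P / Z - (q / Z) * (E / Z) | <= (q / Z) * D.
Proof.
move=> Z0 q0 h1 h2 h3 h4.
have -> : P / Z - (q / Z) * (E / Z) = (q / Z) * (P / q - E / Z).
  by field; rewrite ?gt_eqF.
rewrite normrM (ger0_norm (divr_ge0 (ltW q0) (ltW Z0))); apply: ler_wpM2l; first exact: divr_ge0 (ltW q0) (ltW Z0).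
have a1 : m <= P / q by rewrite ler_pdivlMr.
have a2 : P / q <= m + D by rewrite ler_pdivrMr.
have a3 : m <= E / Z by rewrite ler_pdivlMr.
have a4 : E / Z <= m + D by rewrite ler_pdivrMr.
rewrite ler_norml; apply/andP; split; lra.
Qed.
Arguments arith_step {R G H m D sm sp N a b e}.
Arguments arith_fin {R Z q P E m D}.
Section Main.
Context {d : measure_display} {X : measurableType d} {R : realType}.
Variables (K : nat -> R.-ker X ~> X) (nu : nat -> {finite_measure set X -> \bar R}) (Sm Sp : nat -> X -> R).
Hypotheses (hnu : forall n, (0 < n)%N -> nu n setT != 0%E)
  (hSm_pos : forall n, (0 < n)%N -> forall x, 0 < Sm n x)
  (hSp_pos : forall n, (0 < n)%N -> forall x, 0 < Sp n x)
  (hSp_bd : forall n, (0 < n)%N -> exists M : R, forall x, Sp n x <= M)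
  (hK : forall n, (0 < n)%N -> forall x A, measurable A ->
     ((Sm n x)%:E * nu n A <= K n x A /\ K n x A <= (Sp n x)%:E * nu n A)%E).

Definition fo (f : X -> R) (s : seq nat) := foldr (fun p g => Kop (K p) g) f s.

Lemma fo_S f p k : fo f (iota p k.+1) = Kop (K p) (fo f (iota p.+1 k)).
Proof. by []. Qed.

Ltac hyps p0 := first [exact: (hSm_pos _ p0) | exact: (hSp_pos _ p0) | exact: (hSp_bd _ p0) | exact: (hK _ p0) | exact: (hnu _ p0)].

Lemma w_bd p f : (0 < p)%N -> BM f -> BM (Kop (K p) f).
Proof. by move=> p0; apply: (@Kop_bd _ _ _ (K p) (nu p) (Sm p) (Sp p)); hyps p0. Qed.

Lemma w_lo p f x : (0 < p)%N -> BM f -> (forall y, 0 <= f y) ->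
  Sm p x * mapp (nu p) f <= Kop (K p) f x.
Proof. by move=> p0; apply: (@Kop_lo _ _ _ (K p) (nu p) (Sm p) (Sp p)); hyps p0. Qed.

Lemma w_lo_neg p f x : (0 < p)%N -> BM f -> (forall y, f y <= 0) ->
  Kop (K p) f x <= Sm p x * mapp (nu p) f.
Proof. by move=> p0; apply: (@Kop_lo_neg _ _ _ (K p) (nu p) (Sm p) (Sp p)); hyps p0. Qed.

Lemma w_hi p f x : (0 < p)%N -> BM f -> (forall y, 0 <= f y) ->
  Kop (K p) f x <= Sp p x * mapp (nu p) f.
Proof. by move=> p0; apply: (@Kop_hi _ _ _ (K p) (nu p) (Sm p) (Sp p)); hyps p0. Qed.

Lemma w_lin p f g c x : (0 < p)%N -> BM f -> BM g ->
  Kop (K p) (fun y => f y - c * g y) x = Kop (K p) f x - c * Kop (K p) g x.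
Proof. by move=> p0; apply: (@Kop_lin _ _ _ (K p) (nu p) (Sm p) (Sp p)); hyps p0. Qed.

Lemma fo_bd p k f : (0 < p)%N -> BM f -> BM (fo f (iota p k)).
Proof.
elim: k p => [|k IH] p p0 bf //.
by rewrite fo_S; apply: w_bd => //; exact: IH.
Qed.

Lemma fo_pos p k : (0 < p)%N -> forall y, 0 < fo (fun=> 1) (iota p k) y.
Proof.
elim: k p => [|k IH] p p0 y; first by rewrite /fo /= ltr01.
have bh : BM (fo (fun=> 1) (iota p.+1 k)) by apply: fo_bd => //; exact: BM_cst.
rewrite fo_S; apply: (lt_le_trans _ (w_lo p _ y p0 bh _)).
- apply: mulr_gt0; first exact: hSm_pos.
  apply: mapp_pos => //; first exact: nufin.
  + exact: hnu.
  + exact: IH.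
- by move=> z; apply: ltW; exact: IH.
Qed.

Definition eps p := inf [set Sm p x / Sp p x | x in setT].

Lemma eps_le p x : (0 < p)%N -> eps p <= Sm p x / Sp p x.
Proof.
move=> p0; apply: ge_inf; last by exists x.
exists 0 => _ [y _ <-]; apply: divr_ge0; apply: ltW; [exact: hSm_pos|exact: hSp_pos].
Qed.

Lemma eps_ge0 p (x0 : X) : (0 < p)%N -> 0 <= eps p.
Proof.
move=> p0; apply: lb_le_inf; first by exists (Sm p x0 / Sp p x0), x0.
move=> _ [y _ <-]; apply: divr_ge0; apply: ltW; [exact: hSm_pos|exact: hSp_pos].
Qed.

Lemma nuN_gt0 p : (0 < p)%N -> 0 < fine (nu p setT).
Proof.
move=> p0; apply: fine_gt0; apply/andP; split; last exact: nufin.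
by rewrite lt0e hnu // measure_ge0.
Qed.

Lemma smsp p x : (0 < p)%N -> Sm p x <= Sp p x.
Proof.
move=> p0; have [h1 h2] := hK _ p0 x setT measurableT.
have := le_trans h1 h2; rewrite (nuE (nu p)) -!EFinM lee_fin ler_pM2r //.
exact: nuN_gt0.
Qed.

Lemma eps_le1 p (x0 : X) : (0 < p)%N -> eps p <= 1.
Proof.
move=> p0; apply: (le_trans (eps_le p x0 p0)).
by rewrite ler_pdivrMr ?mul1r ?smsp //; exact: hSp_pos.
Qed.

End Main.
Section Main2.
Context {d : measure_display} {X : measurableType d} {R : realType}.
Variables (K : nat -> R.-ker X ~> X) (nu : nat -> {finite_measure set X -> \bar R}) (Sm Sp : nat -> X -> R).
Hypotheses (hnu : forall n, (0 < n)%N -> nu n setT != 0%E)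
  (hSm_pos : forall n, (0 < n)%N -> forall x, 0 < Sm n x)
  (hSp_pos : forall n, (0 < n)%N -> forall x, 0 < Sp n x)
  (hSp_bd : forall n, (0 < n)%N -> exists M : R, forall x, Sp n x <= M)
  (hK : forall n, (0 < n)%N -> forall x A, measurable A ->
     ((Sm n x)%:E * nu n A <= K n x A /\ K n x A <= (Sp n x)%:E * nu n A)%E).

Local Notation fo := (fo K).
Local Notation eps := (eps Sm Sp).
Ltac hh := first [done | assumption | exact: hnu | exact: hSm_pos | exact: hSp_pos | exact: hSp_bd | exact: hK].

Lemma osc (x0 : X) (phi : X -> R) (c : R) : BM phi -> (forall y, `|phi y| <= c) ->
  forall k p, (0 < p)%N -> exists m, forall y,
    m * fo (fun=> 1) (iota p k) y <= fo phi (iota p k) y /\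
    fo phi (iota p k) y <= (m + 2 * c * \prod_(p <= i < p + k) (1 - eps i)) * fo (fun=> 1) (iota p k) y.
Proof.
move=> bphi hc; elim=> [|k IH] p p0.
  exists (-c) => y; rewrite addn0 big_geq // mulr1 /fo /=.
  by move: (hc y); rewrite ler_norml => /andP[h1 h2]; split; lra.
have [m hm] := IH p.+1 isT.
have bg : BM (fo phi (iota p.+1 k)) by apply: (fo_bd K nu Sm Sp); hh.
have bh : BM (fo (fun=> 1) (iota p.+1 k)) by apply: (fo_bd K nu Sm Sp); try hh; exact: BM_cst.
have hpos : forall y, 0 < fo (fun=> 1) (iota p.+1 k) y by apply: (fo_pos K nu Sm Sp); hh.
set g' := fo phi (iota p.+1 k) in bg hm *.
set h' := fo (fun=> 1) (iota p.+1 k) in bh hm hpos *.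
set D := 2 * c * \prod_(p.+1 <= i < p.+1 + k) (1 - eps i) in hm *.
have bu := BM_lin g' h' m bg bh; have bv := BM_lin g' h' (m + D) bg bh.
have N0 : 0 < mapp (nu p) h'.
  by apply: mapp_pos => //; [exact: nufin| exact: hnu].
set N := mapp (nu p) h' in N0 *.
set a := mapp (nu p) (fun y => g' y - m * h' y).
set b := mapp (nu p) (fun y => g' y - (m + D) * h' y).
have a0 : 0 <= a.
  by rewrite /a mappE; apply: Rintegral_ge0 => y _; rewrite subr_ge0; exact: (hm y).1.
have b0 : b <= 0.
  rewrite /b mappE.
  have := @le_Rintegral _ _ _ (nu p) setT (fun y => g' y - (m + D) * h' y) (fun=> 0) measurableT.
  rewrite Rintegral_cst // mul0r; apply.
  - by apply: int_bm => //; exact: nufin.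
  - by apply: int_bm => //; [exact: nufin | exact: BM_cst].
  - by move=> y _; rewrite subr_le0; exact: (hm y).2.
have ab : a - b = D * N.
  rewrite /a /b /N !mappE !rlin //; try exact: nufin.
  by ring.
exists (m + eps p * (a / N)) => y.
rewrite !fo_S -/g' -/h'.
have H0 : 0 <= Kop (K p) h' y.
  by apply: ltW; have : 0 < fo (fun=> 1) (iota p k.+1) y by apply: (fo_pos K nu Sm Sp); hh.
have hA : Sm p y * a <= Kop (K p) g' y - m * Kop (K p) h' y.
  rewrite -(w_lin K nu Sm Sp); try hh; apply: (w_lo K nu Sm Sp); try hh; move=> z; rewrite subr_ge0; exact: (hm z).1.
have hB : Kop (K p) g' y - (m + D) * Kop (K p) h' y <= Sm p y * b.
  rewrite -(w_lin K nu Sm Sp); try hh; apply: (w_lo_neg K nu Sm Sp); try hh; move=> z; rewrite subr_le0; exact: (hm z).2.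
have hH : Kop (K p) h' y <= Sp p y * N.
  by apply: (w_hi K nu Sm Sp); try hh; move=> z; apply: ltW.
have esp : eps p * Sp p y <= Sm p y.
  rewrite -ler_pdivlMr; last exact: hSp_pos.
  by apply: (eps_le Sm Sp); hh.
have e0 : 0 <= eps p by apply: (eps_ge0 Sm Sp _ _ _ y); hh.
have [s1 s2] := arith_step N0 e0 esp H0 hH hA hB a0 b0 ab.
split => //.
rewrite big_ltn; last by rewrite addnS ltnS leq_addr.
rewrite (_ : (p + k.+1 = p.+1 + k)%N); last by rewrite addnS addSn.
have -> : 2 * c * ((1 - eps p) * \prod_(p.+1 <= i < p.+1 + k) (1 - eps i)) = (1 - eps p) * D.
  by rewrite /D; ring.
exact: s2.
Qed.

End Main2.
Ltac hh := first [done | assumption].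
Theorem proposition3 (d : measure_display) (X : measurableType d) (R : realType)
  (K : nat -> R.-ker X ~> X)
  (nu : nat -> {finite_measure set X -> \bar R})
  (Sm Sp : nat -> X -> R)
  (hnu : forall n, (0 < n)%N -> nu n setT != 0%E)
  (hSm_meas : forall n, (0 < n)%N -> measurable_fun setT (Sm n))
  (hSp_meas : forall n, (0 < n)%N -> measurable_fun setT (Sp n))
  (hSm_pos : forall n, (0 < n)%N -> forall x, 0 < Sm n x)
  (hSp_pos : forall n, (0 < n)%N -> forall x, 0 < Sp n x)
  (hSm_bd : forall n, (0 < n)%N -> exists M : R, forall x, Sm n x <= M)
  (hSp_bd : forall n, (0 < n)%N -> exists M : R, forall x, Sp n x <= M)
  (hK : forall n, (0 < n)%N -> forall x A, measurable A ->
     ((Sm n x)%:E * nu n A <= K n x A /\ K n x A <= (Sp n x)%:E * nu n A)%E) :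
  let CS : \bar R := ereal_sup [set Sbar (Sp n) (Sm n) | n in [set n | (0 < n)%N]] in
  (ereal_sup [set r | exists n (x x' : X), (0 < n)%N /\
       r = ((Kcomp K n (fun=> 1) x) / (Kcomp K n (fun=> 1) x'))%:E]
     <= CS)%E
  /\
  (forall (eta : probability X R) (phi : X -> R),
     measurable_fun setT phi ->
     (exists M : R, forall x, `|phi x| <= M) ->
     forall n, (0 < n)%N ->
     let Z := mapp eta (Kcomp K n (fun=> 1)) in
     (ereal_sup (range (fun x =>
         (`| Kcomp K n phi x / Z
             - (Kcomp K n (fun=> 1) x / Z) * (mapp eta (Kcomp K n phi) / Z) |)%:E))
      <= 2%:E * supnorm phi * CS * (\prod_(1 <= p < n.+1) rho (Sp p) (Sm p))%:E)%E).
Proof.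
move=> CS.
have part1 : forall n x x', (0 < n)%N ->
    (((Kcomp K n (fun=> 1) x) / (Kcomp K n (fun=> 1) x'))%:E <= CS)%E.
  move=> [|n] x x' // _.
  have -> : Kcomp K n.+1 (fun=> 1) = Kop (K 1%N) (fo K (fun=> 1) (iota 2 n)) by [].
  set h := fo K (fun=> 1) (iota 2 n).
  have bh : BM h by apply: (fo_bd K nu Sm Sp); try hh; exact: BM_cst.
  have hpos : forall y, 0 < h y by apply: (fo_pos K nu Sm Sp); hh.
  have N0 : 0 < mapp (nu 1%N) h by apply: mapp_pos => //; [exact: nufin | exact: hnu].
  have u : Kop (K 1%N) h x <= Sp 1%N x * mapp (nu 1%N) h.
    by apply: (w_hi K nu Sm Sp); try hh; move=> y; exact: ltW.
  have l : Sm 1%N x' * mapp (nu 1%N) h <= Kop (K 1%N) h x'.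
    by apply: (w_lo K nu Sm Sp); try hh; move=> y; exact: ltW.
  have sm0 : 0 < Sm 1%N x' by exact: hSm_pos.
  have sp0 : 0 < Sp 1%N x by exact: hSp_pos.
  have q0 : 0 < Kop (K 1%N) h x' by apply: (lt_le_trans _ l); exact: mulr_gt0.
  apply: (@le_trans _ _ (Sbar (Sp 1%N) (Sm 1%N))).
    apply: (@le_trans _ _ ((Sp 1%N x / Sm 1%N x')%:E)).
      rewrite lee_fin ler_pdivrMr //; apply: (le_trans u).
      have -> : Sp 1%N x * mapp (nu 1%N) h = Sp 1%N x / Sm 1%N x' * (Sm 1%N x' * mapp (nu 1%N) h).
        by field; rewrite gt_eqF.
      by apply: ler_wpM2l => //; apply: divr_ge0; exact: ltW.
    by apply: ereal_sup_ubound; exists x => //; exists x'.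
  by apply: ereal_sup_ubound; exists 1%N.
clearbody CS.
split.
  by apply: ge_ereal_sup => _ [n [x [x' [n0 ->]]]]; exact: part1.
move=> eta phi mphi [M hM] n n0; cbv zeta.
apply: ge_ereal_sup => _ [x _ <-].
have bphi : BM phi by split => //; exists M.
have sn_ub : (supnorm phi <= M%:E)%E by apply: ge_ereal_sup => _ [y _ <-]; rewrite lee_fin hM.
have sn_lb : forall y, ((`|phi y|)%:E <= supnorm phi)%E.
  by move=> y; apply: ereal_sup_ubound; exists y.
have snfin : supnorm phi \is a fin_num.
  rewrite ge0_fin_numE; first exact: (le_lt_trans sn_ub (ltry _)).
  exact: (le_trans _ (sn_lb x)).
set c := fine (supnorm phi).
have snE : supnorm phi = c%:E by rewrite fineK.
have hc : forall y, `|phi y| <= c by move=> y; rewrite -lee_fin -snE.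
have c0 : 0 <= c := le_trans (normr_ge0 _) (hc x).
have [m hm] : exists m, forall y,
    m * fo K (fun=> 1) (iota 1 n) y <= fo K phi (iota 1 n) y /\
    fo K phi (iota 1 n) y <= (m + 2 * c * \prod_(1 <= i < 1 + n) (1 - eps Sm Sp i)) * fo K (fun=> 1) (iota 1 n) y.
  by apply: (osc K nu Sm Sp); hh.
set D := 2 * c * \prod_(1 <= i < 1 + n) (1 - eps Sm Sp i) in hm.
have Q1E : Kcomp K n (fun=> 1) = fo K (fun=> 1) (iota 1 n) by [].
have QpE : Kcomp K n phi = fo K phi (iota 1 n) by [].
rewrite Q1E QpE.
set Q1 := fo K (fun=> 1) (iota 1 n) in hm *.
set Qp := fo K phi (iota 1 n) in hm *.
have bQ1 : BM Q1 by apply: (fo_bd K nu Sm Sp); try hh; exact: BM_cst.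
have bQp : BM Qp by apply: (fo_bd K nu Sm Sp); hh.
have Q1pos : forall y, 0 < Q1 y by apply: (fo_pos K nu Sm Sp); hh.
have etaT : eta setT = 1%E by exact: probability_setT.
have etafin : (eta setT < +oo)%E by rewrite etaT ltry.
have etaT0 : (eta setT != 0)%E by rewrite etaT onee_neq0.
have Z0 : 0 < mapp eta Q1 by apply: mapp_pos; [exact: etafin | exact: etaT0 | exact: bQ1 | exact: Q1pos].
have hE1 : m * mapp eta Q1 <= mapp eta Qp.
  rewrite !mappE -RintegralZl //; last exact: int_bm.
  apply: le_Rintegral => //; try exact: int_bm.
  - by apply: int_bm => //; exact: BM_scal.
  - by move=> y _; exact: (hm y).1.
have hE2 : mapp eta Qp <= (m + D) * mapp eta Q1.
  rewrite !mappE -RintegralZl //; last exact: int_bm.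
  apply: le_Rintegral => //; try exact: int_bm.
  - by apply: int_bm => //; exact: BM_scal.
  - by move=> y _; exact: (hm y).2.
have key := arith_fin Z0 (Q1pos x) (hm x).1 (hm x).2 hE1 hE2.
have CS1 : ((Q1 x / Q1 x)%:E <= CS)%E by exact: part1.
have CS0 : (0 <= CS)%E.
  by apply: le_trans CS1; rewrite divff ?gt_eqF // lee_fin.
have qZ : ((Q1 x / mapp eta Q1)%:E <= CS)%E.
  have h1 : forall x', ((Q1 x / Q1 x')%:E <= CS)%E by move=> x'; exact: part1.
  move: h1 CS1; clear part1 CS0; case: CS => [r| |] h1 CS1; last by rewrite leeNy_eq in CS1.
    have h2 : forall x', Q1 x <= r * Q1 x'.
      by move=> x'; move: (h1 x'); rewrite lee_fin ler_pdivrMr.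
    rewrite lee_fin ler_pdivrMr // !mappE.
    have -> : Q1 x = Rintegral eta setT (fun=> Q1 x).
      rewrite Rintegral_cst // -[LHS]mulr1; congr (_ * _); exact: (esym (congr1 fine etaT)).
    rewrite -RintegralZl //; last exact: int_bm.
    apply: le_Rintegral; [done | by apply: int_bm => //; exact: BM_cst | by apply: int_bm => //; exact: BM_scal | by move=> y _; exact: h2].
  exact: leey.
have D0 : 0 <= D.
  rewrite /D; apply: mulr_ge0; first by apply: mulr_ge0.
  rewrite big_nat_cond; apply: prodr_ge0 => i /andP[/andP[i1 _] _].
  by rewrite subr_ge0; apply: (eps_le1 K nu Sm Sp); try hh; exact: x.
have DP : D <= 2 * c * \prod_(1 <= p < n.+1) rho (Sp p) (Sm p).
  rewrite /D add1n; apply: ler_wpM2l; first exact: mulr_ge0.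
  rewrite big_nat_cond [leRHS]big_nat_cond; apply: ler_prod => i /andP[/andP[i1 _] _].
  have e0 : 0 <= eps Sm Sp i by apply: (eps_ge0 Sm Sp _ _ _ x); hh.
  have e1 : eps Sm Sp i <= 1 by apply: (eps_le1 K nu Sm Sp); try hh; exact: x.
  have -> : rho (Sp i) (Sm i) = 1 - eps Sm Sp i ^+ 2 by [].
  rewrite subr_ge0 e1 /= lerD2l lerN2 expr2.
  by rewrite ler_piMr.
apply: (@le_trans _ _ ((D * (Q1 x / mapp eta Q1))%:E)).
  by rewrite lee_fin [D * _]mulrC; exact: key.
rewrite snE EFinM.
apply: (@le_trans _ _ (D%:E * CS)%E).
  by apply: lee_wpmul2l => //; rewrite lee_fin.
rewrite muleAC -!EFinM.
by apply: lee_wpmul2r => //; rewrite lee_fin.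
Qed.
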